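(* Let $q\equiv1\pmod3$ and let $v\in\mathbb{F}_q^*$ be a non-cube in $\mathbb{F}_q$. Then $\#\mathcal{J}_{\mathrm{GH},v}=(q+2)/3$.
   Context: For $u,v\in\mathbb{F}_q$ with $v\ne0$ and $u^3\ne27v$, the generalized Hessian curve $E_{\mathrm{GH},u,v}$ is the elliptic curve $X^3+Y^3+v=uXY$ over $\mathbb{F}_q$, with $j(E_{\mathrm{GH},u,v})=\frac1v\left(\frac{u(u^3+216v)}{u^3-27v}\right)^3$. For $v\in\mathbb{F}_q^*$, $\mathcal{J}_{\mathrm{GH},v}=\{j(E_{\mathrm{GH},u,v}): u\in\mathbb{F}_q,\ u^3\ne27v\}$. *)

(* Defs.v *)
From HB Require Import structures.
From mathcomp Require Import all_boot all_order all_algebra all_field.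
Set Implicit Arguments. Unset Strict Implicit. Unset Printing Implicit Defensive.
Import GRing.Theory.
Local Open Scope ring_scope.

(* j-invariant of the generalized Hessian curve X^3 + Y^3 + v = u X Y:
   j = (1/v) * ( u (u^3 + 216 v) / (u^3 - 27 v) )^3 *)
Definition jGH (F : fieldType) (u v : F) : F :=
  v^-1 * (u * (u ^+ 3 + 216%:R * v) / (u ^+ 3 - 27%:R * v)) ^+ 3.

Definition JGH (F : finFieldType) (v : F) : {set F} :=
  [set jGH u v | u in [pred u : F | u ^+ 3 != 27%:R * v]].

(* Main.v *)
Require Import Defs.
From HB Require Import structures.
From mathcomp Require Import all_boot all_order all_algebra all_field.
From mathcomp Require Import ring.
Import GRing.Theory.
Set Implicit Arguments. Unset Strict Implicit. Unset Printing Implicit Defensive.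
Local Open Scope ring_scope.

Lemma adj0 (F : fieldType) (v a b d : F) : (forall w : F, w ^+ 3 != v) ->
  a ^+ 2 - v * b * d = 0 -> v * d ^+ 2 - a * b = 0 -> b ^+ 2 - a * d = 0 ->
  [/\ a = 0, b = 0 & d = 0].
Proof.
move=> nc /eqP; rewrite subr_eq0 => /eqP e0 /eqP; rewrite subr_eq0 => /eqP e1 /eqP; rewrite subr_eq0 => /eqP e2.
have [d0|dn0] := eqVneq d 0.
  move: e2; rewrite d0 mulr0 => /eqP; rewrite sqrf_eq0 => /eqP b0.
  move: e0; rewrite b0 d0 !mulr0 => /eqP; rewrite sqrf_eq0 => /eqP a0. by [].
exfalso; move: (nc (b / d)); rewrite expr_div_n; apply/negP; rewrite negbK.
have h : v * d ^+ 3 = b ^+ 3.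
  have -> : v * d ^+ 3 = (v * d ^+ 2) * d by ring.
  rewrite e1; have -> : a * b * d = b * (a * d) by ring.
  rewrite -e2; ring.
by rewrite -h mulfK // expf_neq0.
Qed.

Lemma aniso (F : fieldType) (v a b d : F) : (forall w : F, w ^+ 3 != v) ->
  a ^+ 3 + v * b ^+ 3 + v ^+ 2 * d ^+ 3 - 3%:R * v * a * b * d = 0 ->
  [/\ a = 0, b = 0 & d = 0].
Proof.
move=> nc hN.
have e0 : (a ^+ 2 - v * b * d) ^+ 2 - v * (v * d ^+ 2 - a * b) * (b ^+ 2 - a * d) = 0.
  by rewrite -[RHS](mulr0 a) -hN; ring.
have e1 : v * (b ^+ 2 - a * d) ^+ 2 - (a ^+ 2 - v * b * d) * (v * d ^+ 2 - a * b) = 0.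
  by rewrite -[RHS](mulr0 b) -hN; ring.
have e2 : (v * d ^+ 2 - a * b) ^+ 2 - (a ^+ 2 - v * b * d) * (b ^+ 2 - a * d) = 0.
  by rewrite -[RHS](mulr0 d) -hN; ring.
have [h0 h1 h2] := adj0 nc e0 e1 e2.
exact: adj0 nc h0 h1 h2.
Qed.

Lemma jGHE (F : fieldType) (u v : F) : jGH u v =
  v^-1 * (u ^+ 3 * (u ^+ 3 + 216%:R * v) ^+ 3 / (u ^+ 3 - 27%:R * v) ^+ 3).
Proof. by rewrite /jGH expr_div_n exprMn. Qed.

Lemma natr_neq0 (F : fieldType) (n k : nat) : (n%:R : F) != 0 -> ((n ^ k)%:R : F) != 0.
Proof. by move=> h; rewrite natrX expf_neq0. Qed.

Lemma B_neq0 (F : fieldType) (v u : F) : (forall w : F, w ^+ 3 != v) -> (3%:R : F) != 0 ->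
  u ^+ 3 - 27%:R * v != 0.
Proof.
move=> nc h3; apply/negP; rewrite subr_eq0 => /eqP e.
have h27 : (27%:R : F) != 0 by rewrite (_ : 27 = 3 ^ 3)%N // natr_neq0.
move: (nc (u / 3%:R)); rewrite expr_div_n e -natrX /= mulrC mulKf //.
by rewrite eqxx.
Qed.

Lemma key (F : fieldType) (v u u' : F) : v != 0 -> (forall w : F, w ^+ 3 != v) ->
  (3%:R : F) != 0 -> jGH u v = jGH u' v -> u ^+ 3 = u' ^+ 3.
Proof.
move=> v0 nc h3 hj.
rewrite !jGHE in hj; move/(mulfI (invr_neq0 v0)): hj => hj.
have Bt := B_neq0 u nc h3; have Bs := B_neq0 u' nc h3.
move/eqP: hj; rewrite eqr_div ?expf_neq0 // => /eqP hj.
have h27 : (27%:R : F) != 0 by rewrite (_ : 27 = 3 ^ 3)%N // natr_neq0.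
have h81 : (81%:R : F) != 0 by rewrite (_ : 81 = 3 ^ 4)%N // natr_neq0.
have hN : (u ^+ 3 - u' ^+ 3) *
  ((u' ^+ 3 * (u ^+ 3 - 27%:R * v) - 27%:R * v * (u ^+ 3 + 216%:R * v)) ^+ 3
   + v * (- 9%:R * u ^+ 2 * (u' ^+ 3 + 54%:R * v)) ^+ 3
   + v ^+ 2 * (27%:R * u * (u' ^+ 3 - 108%:R * v)) ^+ 3
   - 3%:R * v * (u' ^+ 3 * (u ^+ 3 - 27%:R * v) - 27%:R * v * (u ^+ 3 + 216%:R * v))
     * (- 9%:R * u ^+ 2 * (u' ^+ 3 + 54%:R * v))
     * (27%:R * u * (u' ^+ 3 - 108%:R * v))) = 0.
  rewrite -(subrr (u ^+ 3 * (u ^+ 3 + 216%:R * v) ^+ 3 * (u' ^+ 3 - 27%:R * v) ^+ 3)).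
  rewrite [X in _ = _ - X]hj; ring.
move/eqP: hN; rewrite mulf_eq0 subr_eq0 => /orP [/eqP // | /eqP hN].
have [a0 _ g0] := aniso nc hN.
have [u0|un0] := eqVneq u 0.
  subst u.
  have : 27%:R * v * (u' ^+ 3 + 216%:R * v) = 0.
    by rewrite -[RHS]oppr0 -a0; ring.
  move/eqP; rewrite !mulf_eq0 (negbTE h27) (negbTE v0) /= addr_eq0 => /eqP e.
  have [h2|h2] := eqVneq (2%:R : F) 0.
    by rewrite e (_ : 216 = 2 * 108)%N // natrM h2 !mul0r oppr0 expr0n.
  have h6 : (6%:R : F) != 0 by rewrite (_ : 6 = 2 * 3)%N // natrM mulf_neq0.
  move: (nc (- u' / 6%:R)); rewrite expr_div_n exprNn e -natrX /=.
  rewrite (_ : (6 ^ 3 = 216)%N) //.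
  have h216 : (216%:R : F) != 0 by rewrite -[216%N]/(6 ^ 3)%N natr_neq0.
  have -> : (-1) ^+ 3 * - (216%:R * v) = 216%:R * v :> F by ring.
  by rewrite mulrC mulKf // eqxx.
have g1 : u' ^+ 3 = 108%:R * v.
  move/eqP: g0; rewrite !mulf_eq0 (negbTE h27) (negbTE un0) /= subr_eq0.
  by move/eqP.
rewrite g1 in a0 *.
have : 81%:R * v * (u ^+ 3 - 108%:R * v) = 0 by rewrite -a0; ring.
move/eqP; rewrite !mulf_eq0 (negbTE h81) (negbTE v0) /= subr_eq0.
by move/eqP.
Qed.

Lemma zeta_ex (F : finFieldType) : (#|F| %% 3 = 1)%N -> exists2 z : F, z ^+ 3 = 1 & z != 1.
Proof.
move=> hq; set m := (#|F| %/ 3)%N.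
have hF : #|F| = (m * 3 + 1)%N by rewrite {1}(divn_eq #|F| 3) hq.
have m0 : (0 < m)%N.
  have : (1 < #|F|)%N by rewrite (cardD1 (0 : F)) (cardD1 (1 : F)) !inE oner_neq0.
  rewrite hF; case: (m) => //.
have [x /andP [x0 xm] | none] := pickP [pred x : F | (x != 0) && (x ^+ m != 1)].
  exists (x ^+ m) => //.
  apply: (mulIf x0); rewrite mul1r -exprM -exprSr -addn1 -hF.
  exact: expf_card.
exfalso.
have := @max_unity_roots F m (enum (predC1 (0 : F))) m0.
rewrite enum_uniq -cardE cardC1 hF addn1 /= => /(_ _ isT).
have -> : all m.-unity_root (enum (predC1 (0 : F))).
  apply/allP => x; rewrite mem_enum /= => x0; apply/unity_rootP.
  rewrite inE in x0.
  by move: (none x) => /=; rewrite x0 /= => /negbT; rewrite negbK => /eqP.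
move/(_ isT); apply/negP; rewrite -ltnNge.
by rewrite -[X in (X < _)%N]muln1 ltn_mul2l m0.
Qed.

Lemma zeta_props (F : fieldType) (z : F) : z ^+ 3 = 1 -> z != 1 ->
  (3%:R : F) != 0 /\ z ^+ 2 + z + 1 = 0.
Proof.
move=> z3 z1.
have e : z ^+ 2 + z + 1 = 0.
  have : (z - 1) * (z ^+ 2 + z + 1) = 0 by rewrite -(subrr (1 : F)) -{3}z3; ring.
  by move/eqP; rewrite mulf_eq0 subr_eq0 (negbTE z1) /= => /eqP.
split => //; apply/negP => /eqP h3.
have : (z - 1) ^+ 3 = 0.
  have -> : (z - 1) ^+ 3 = (z ^+ 3 - 1) - 3%:R * (z ^+ 2 - z) by ring.
  by rewrite z3 subrr h3 mul0r subr0.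
by move/eqP; rewrite expf_eq0 /= subr_eq0 (negbTE z1).
Qed.

Lemma fiber (F : finFieldType) (z w x : F) : z ^+ 2 + z + 1 = 0 ->
  (x ^+ 3 == w ^+ 3) = (x \in [set w; z * w; z ^+ 2 * w]).
Proof.
move=> e.
have fac : x ^+ 3 - w ^+ 3 = (x - w) * (x - z * w) * (x - z ^+ 2 * w).
  have -> : (x - w) * (x - z * w) * (x - z ^+ 2 * w) = x ^+ 3 - w ^+ 3
     - (z ^+ 2 + z + 1) * (w * x ^+ 2 - z * w ^+ 2 * x + (z - 1) * w ^+ 3) by ring.
  by rewrite e mul0r subr0.
by rewrite -subr_eq0 fac !mulf_eq0 !subr_eq0 !inE.
Qed.

Lemma card_fiber (F : finFieldType) (z w : F) : z ^+ 3 = 1 -> z != 1 -> w != 0 ->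
  #|[set w; z * w; z ^+ 2 * w]| = 3%N.
Proof.
move=> z3 z1 w0; have [h3 e] := zeta_props z3 z1.
have z0 : z != 0 by apply: contraNneq z1 => z0; move: z3; rewrite z0 expr0n => /eqP; rewrite eq_sym oner_eq0.
have z21 : z ^+ 2 != 1.
  apply: contraNneq z1 => z2; by rewrite -z3 exprS z2 mulr1.
have zz2 : z != z ^+ 2.
  apply: contraNneq z1 => zz.
  have : z * z = z * 1 by rewrite mulr1 -expr2 -zz.
  by move/(mulfI z0) ->.
have f1 : (w == z * w) = false.
  apply/negbTE/eqP => h; move/eqP: z1; apply; apply: (mulIf w0); by rewrite mul1r -h.
have f2 : (w == z ^+ 2 * w) = false.
  apply/negbTE/eqP => h; move/eqP: z21; apply; apply: (mulIf w0); by rewrite mul1r -h.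
have f3 : (z * w == z ^+ 2 * w) = false.
  apply/negbTE/eqP => h; move/eqP: zz2; apply; exact: (mulIf w0).
by rewrite -setUA cardsU1 cards2 !inE f1 f2 f3.
Qed.

Lemma cubes_card (F : finFieldType) (z : F) : z ^+ 3 = 1 -> z != 1 ->
  #|F| = (1 + 3 * (#|[set x ^+ 3 | x in [set: F]]| - 1))%N.
Proof.
move=> z3 z1; have [h3 e] := zeta_props z3 z1.
set C := [set x ^+ 3 | x in [set: F]].
have C0 : (0 : F) \in C by apply/imsetP; exists 0; rewrite ?inE // expr0n.
rewrite -[LHS]sum1_card (partition_big (fun x : F => x ^+ 3) (fun y => y \in C)); last first.
  by move=> i _; apply: imset_f; rewrite inE.
rewrite (bigD1 (0 : F)) //=.
have -> : \sum_(i in F | i ^+ 3 == 0) 1 = 1%N.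
  rewrite (eq_bigl (fun i => i == 0)) ?big_pred1_eq // => i.
  by rewrite /= expf_eq0.
rewrite (eq_bigr (fun _ => 3%N)); last first.
  move=> j /andP [/imsetP [w _ ->] j0].
  have w0 : w != 0 by apply: contraNneq j0 => ->; rewrite expr0n.
  rewrite (eq_bigl (fun i => i \in [set w; z * w; z ^+ 2 * w])) ?sum1_card ?card_fiber //.
  by move=> i; rewrite /= (fiber _ _ e).
rewrite (eq_bigl (fun j => j \in C :\ 0)); last by move=> j; rewrite !inE andbC.
by rewrite sum_nat_const (cardsD1 0 C) C0 add1n subn1 /= mulnC.
Qed.

From mathcomp Require Import zify.
Local Close Scope ring_scope.

Theorem mainTheorem14 (F : finFieldType) (v : F) :
  #|F| %% 3 = 1 ->
  (v != 0)%R ->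
  (forall w : F, (w ^+ 3 != v)%R) ->
  #|JGH v| = ((#|F| + 2) %/ 3)%N.
Proof.
Local Open Scope ring_scope.
move=> hq v0 nc.
have [z z3 z1] := zeta_ex hq; have [h3 _] := zeta_props z3 z1.
pose h := fun t : F => v^-1 * (t * (t + 216%:R * v) ^+ 3 / (t - 27%:R * v) ^+ 3).
set C := [set x ^+ 3 | x in [set: F]].
have -> : JGH v = h @: C.
  apply/setP => j; apply/imsetP/imsetP.
    case=> u _ ->; exists (u ^+ 3); first by apply: imset_f; rewrite inE.
    by rewrite jGHE.
  case=> t /imsetP [u _ ->] ->; exists u; last by rewrite jGHE.
  by rewrite inE /= -subr_eq0 B_neq0.
rewrite card_in_imset; last first.
  move=> _ _ /imsetP [x _ ->] /imsetP [y _ ->] /= e.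
  by apply: (key v0 nc h3); rewrite !jGHE.
have := cubes_card z3 z1; rewrite -/C => hF.
have C0 : (0 < #|C|)%N.
  by apply/card_gt0P; exists 0; apply/imsetP; exists 0; rewrite ?inE // expr0n.
rewrite hF; move: C0; clear; case: #|C| => // c _.
rewrite subSS subn0 (_ : (1 + 3 * c + 2 = c.+1 * 3)%N) ?mulnK //; lia.
Qed.
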